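(* The following transitive interval exchange transformations exist: (a) for each $f\in\{1,2,3\}$, a transitive $4$-IET with exactly $f$ flips and without fake discontinuities; (b) a transitive $5$-IET with exactly $5$ flips having exactly one fake discontinuity; (c) a transitive $5$-IET with exactly $5$ flips and without fake discontinuities.
   Context: An $n$-IET $T$ of $[0,\ell]$ is given by a partition $0=a_0<\dots<a_n=\ell$, domain intervals $I_i=(a_{i-1},a_i)$, and an injective map $T:\bigcup I_i\to[0,\ell]$ that is an isometry on each $I_i$ and cannot be continuously extended to a larger open set. Let $J_1,\dots,J_n$ be the range intervals, ordered left to right. Define the permutation $\pi$ of $\{1,\dots,n\}$ by $T(I_i)=J_{\pi(i)}$ and $\theta_i=+1$ if $T$ preserves orientation on $I_i$, $\theta_i=-1$ if it reverses it (a flip). $T$ has a fake discontinuity if precisely one of the following happens: (a) for exactly one $1\le i\le n-1$, $\pi(i)=n$, $\pi(i+1)=1$ and $\theta_i=\theta_{i+1}=+1$; (b) for exactly one $1\le i\le n-1$, $\pi(i)=1$, $\pi(i+1)=n$ and $\theta_i=\theta_{i+1}=-1$; (c) $\pi(1)=\pi(n)+1$ and $\theta_1=\theta_n=+1$; (d) $\pi(1)=\pi(n)-1$ and $\theta_1=\theta_n=-1$. $T$ is without fake discontinuities if none of (a)–(d) occurs. $T$ is transitive if some orbit $\{T^m(p): m\in\mathbb{Z},\ p\in\mathrm{Dom}(T^m)\}$ is dense in $[0,\ell]$. *)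

(* Defs.v *)
From Stdlib Require Import Reals Lra Lia Arith.
Open Scope R_scope.

Fixpoint sumR (f : nat -> R) (n : nat) : R :=
  match n with
  | O => 0
  | S k => sumR f k + f (S k)
  end.

Fixpoint countb (p : nat -> bool) (n : nat) : nat :=
  match n with
  | O => O
  | S k => (countb p k + (if p (S k) then 1 else 0))%nat
  end.

(* Combinatorial data of an n-IET (indices 1..n):
   lam i  = length of the domain interval I_i,
   pi     = the permutation, T(I_i) = J_(pi i),
   flip i = true iff theta_i = -1 (T reverses orientation on I_i). *)
Record IET := mkIET {
  nI : nat;
  lam : nat -> R;
  pi : nat -> nat;
  flip : nat -> bool
}.

Definition len (T : IET) : R := sumR (lam T) (nI T).

Definition apt (T : IET) (i : nat) : R := sumR (lam T) i.

(* right endpoint of the range interval J_k (left endpoint is bpt (k-1)):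
   the J_k are ordered left to right, |J_(pi i)| = |I_i| *)
Definition bpt (T : IET) (k : nat) : R :=
  sumR (fun j => if Nat.leb (pi T j) k then lam T j else 0) (nI T).

(* the map T : union of I_i -> [0,l], as a (functional) relation T x = y *)
Definition Tmap (T : IET) (x y : R) : Prop :=
  exists i : nat, (1 <= i <= nI T)%nat /\
    apt T (i - 1) < x < apt T i /\
    y = (if flip T i
         then bpt T (pi T i) - (x - apt T (i - 1))
         else bpt T (pi T i - 1) + (x - apt T (i - 1))).

Definition IET_data_ok (T : IET) : Prop :=
  (forall i, (1 <= i <= nI T)%nat -> 0 < lam T i) /\
  (forall i, (1 <= i <= nI T)%nat -> (1 <= pi T i <= nI T)%nat) /\
  (forall i j, (1 <= i <= nI T)%nat -> (1 <= j <= nI T)%nat ->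
      pi T i = pi T j -> i = j).

(* T cannot be continuously extended to a larger open set: at no interior
   partition point a_i (1 <= i <= n-1) does T have a limit. *)
Definition not_extendable (T : IET) : Prop :=
  forall i, (1 <= i <= nI T - 1)%nat ->
    ~ (exists y : R, forall eps, 0 < eps -> exists delta, 0 < delta /\
         forall x z, Tmap T x z -> x <> apt T i -> Rabs (x - apt T i) < delta ->
           Rabs (z - y) < eps).

Definition is_IET (T : IET) : Prop := IET_data_ok T /\ not_extendable T.

Definition nflips (T : IET) : nat := countb (flip T) (nI T).

Fixpoint iter_rel (F : R -> R -> Prop) (m : nat) (x y : R) : Prop :=
  match m with
  | O => x = y
  | S k => exists z, F x z /\ iter_rel F k z y
  end.

(* the orbit {T^m(p) : m in Z, p in Dom(T^m)}; T^(-m)(p) = q iff T^m(q) = p *)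
Definition orbit (T : IET) (p q : R) : Prop :=
  exists m : nat, iter_rel (Tmap T) m p q \/ iter_rel (Tmap T) m q p.

Definition dense_in_0l (T : IET) (S : R -> Prop) : Prop :=
  forall x, 0 <= x <= len T -> forall eps, 0 < eps ->
    exists q, S q /\ Rabs (q - x) < eps.

Definition transitive (T : IET) : Prop :=
  exists p, 0 <= p <= len T /\ dense_in_0l T (orbit T p).

Definition fakeA (T : IET) : Prop :=
  exists! i : nat, (1 <= i <= nI T - 1)%nat /\ pi T i = nI T /\ pi T (S i) = 1%nat
    /\ flip T i = false /\ flip T (S i) = false.
Definition fakeB (T : IET) : Prop :=
  exists! i : nat, (1 <= i <= nI T - 1)%nat /\ pi T i = 1%nat /\ pi T (S i) = nI T
    /\ flip T i = true /\ flip T (S i) = true.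
Definition fakeC (T : IET) : Prop :=
  pi T 1 = S (pi T (nI T)) /\ flip T 1 = false /\ flip T (nI T) = false.
Definition fakeD (T : IET) : Prop :=
  S (pi T 1) = pi T (nI T) /\ flip T 1 = true /\ flip T (nI T) = true.

Definition has_fake_discontinuity (T : IET) : Prop :=
  (fakeA T /\ ~ fakeB T /\ ~ fakeC T /\ ~ fakeD T) \/
  (~ fakeA T /\ fakeB T /\ ~ fakeC T /\ ~ fakeD T) \/
  (~ fakeA T /\ ~ fakeB T /\ fakeC T /\ ~ fakeD T) \/
  (~ fakeA T /\ ~ fakeB T /\ ~ fakeC T /\ fakeD T).

Definition without_fake_discontinuities (T : IET) : Prop :=
  ~ fakeA T /\ ~ fakeB T /\ ~ fakeC T /\ ~ fakeD T.

(* Main.v *)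
Require Import Defs.
From Stdlib Require Import Reals.
From Stdlib Require Import Lra Lia ZArith Arith.
Open Scope R_scope.

Definition alpha : R := (sqrt 5 - 1) / 2.

Lemma sqrt5_sq : sqrt 5 * sqrt 5 = 5.
Proof. apply sqrt_sqrt; lra. Qed.

Lemma alpha_sq : alpha * alpha = 1 - alpha.
Proof. unfold alpha. pose proof sqrt5_sq. nra. Qed.

Lemma alpha_bounds : 0.6180339 < alpha < 0.6180340.
Proof.
  unfold alpha. pose proof sqrt5_sq as H. pose proof (sqrt_pos 5) as H0.
  split; nra.
Qed.

Lemma no_sqrt5_Z : forall n : nat, forall a b : Z,
  Z.to_nat (b*b) = n -> b <> 0%Z -> (a*a <> 5*(b*b))%Z.
Proof.
  intro n. induction n as [n IH] using lt_wf_ind.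
  intros a b Hn Hb Hab.
  pose proof (Z.mod_pos_bound a 5 ltac:(lia)) as Hr.
  pose proof (Z_div_mod_eq_full a 5) as Hd.
  set (q := (a / 5)%Z) in *. set (r := (a mod 5)%Z) in *.
  assert (Hrr : (r*r = 5*(b*b - 5*q*q - 2*q*r))%Z) by (rewrite Hd in Hab; lia).
  assert (Hr0 : r = 0%Z).
  { assert (r = 0 \/ r = 1 \/ r = 2 \/ r = 3 \/ r = 4)%Z as Hc by lia.
    destruct Hc as [H|[H|[H|[H|H]]]]; rewrite H in Hrr; try lia. }
  rewrite Hr0 in Hd.
  assert (Hbq : (b*b = 5*(q*q))%Z) by (rewrite Hd in Hab; lia).
  assert (Hq : q <> 0%Z) by (intro Hq; rewrite Hq in Hbq; nia).
  assert (Hlt : (q*q < b*b)%Z) by nia.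
  apply (IH (Z.to_nat (q*q))) with (a := b) (b := q); try lia.
Qed.

Lemma alpha_irr : forall m q : Z, m <> 0%Z -> IZR m * alpha <> IZR q.
Proof.
  intros m q Hm H. unfold alpha in H.
  assert (H2 : IZR m * sqrt 5 = IZR (2*q + m)).
  { rewrite plus_IZR, mult_IZR.
    replace (IZR m * sqrt 5) with (2 * (IZR m * ((sqrt 5 - 1) / 2)) + IZR m) by field.
    rewrite H. simpl. ring. }
  assert (H3 : IZR (5 * (m*m)) = IZR ((2*q+m)*(2*q+m))).
  { rewrite (mult_IZR (2*q+m)). rewrite <- H2.
    rewrite !mult_IZR.
    replace (IZR m * sqrt 5 * (IZR m * sqrt 5)) with (IZR m * IZR m * (sqrt 5 * sqrt 5)) by ring.
    rewrite sqrt5_sq. ring. }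
  apply eq_IZR in H3.
  apply (no_sqrt5_Z (Z.to_nat (m*m)) (2*q+m) m eq_refl Hm). lia.
Qed.

Definition Good (x : R) : Prop := forall a b : Z, x <> IZR a + IZR b * alpha.

Lemma good_half : forall c0 c1 : Z, Good (IZR c0 + IZR c1 * alpha + 1/2).
Proof.
  intros c0 c1 a b H.
  destruct (Z.eq_dec c1 b) as [E|E].
  - subst. assert (H2 : IZR (2*(a - c0)) = IZR 1) by (rewrite mult_IZR, minus_IZR; lra).
    apply eq_IZR in H2. lia.
  - apply (alpha_irr (2*(c1-b)) (2*(a-c0) - 1)); [lia|].
    repeat rewrite ?mult_IZR, ?minus_IZR. lra.
Qed.

Lemma good_shift : forall x a b, Good x -> Good (x + IZR a + IZR b * alpha).
Proof.
  intros x a b Hx a' b' H. apply (Hx (a'-a)%Z (b'-b)%Z).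
  rewrite !minus_IZR. lra.
Qed.

Lemma good_split : forall x (a b : Z), Good x ->
  x < IZR a + IZR b * alpha \/ IZR a + IZR b * alpha < x.
Proof.
  intros x a b Hx. destruct (Rtotal_order x (IZR a + IZR b * alpha)) as [H|[H|H]]; auto.
  exfalso; exact (Hx a b H).
Qed.

Definition Reach (T : IET) (x y : R) : Prop := exists m, iter_rel (Tmap T) m x y.

Lemma reach_refl : forall T x y, x = y -> Reach T x y.
Proof. intros T x y H. exists O. exact H. Qed.

Lemma reach_step : forall T x z y, Tmap T x z -> Reach T z y -> Reach T x y.
Proof. intros T x z y H [m Hm]. exists (S m). exists z. auto. Qed.

Lemma iter_trans : forall F m k x y z, iter_rel F m x y -> iter_rel F k y z ->
  iter_rel F (m + k) x z.
Proof.
  intros F m. induction m as [|m IH]; intros k x y z H1 H2; simpl in *.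
  - subst; auto.
  - destruct H1 as [w [Hw1 Hw2]]. exists w. split; auto. eapply IH; eauto.
Qed.

Lemma reach_trans : forall T x y z, Reach T x y -> Reach T y z -> Reach T x z.
Proof. intros T x y z [m Hm] [k Hk]. exists (m+k)%nat. eapply iter_trans; eauto. Qed.

Lemma golden_pow : forall j, exists N K : nat, alpha ^ (2*j+1) = INR N * alpha - INR K.
Proof.
  induction j as [|j [N [K IH]]].
  - exists 1%nat, 0%nat. simpl. ring.
  - exists (2*N+K)%nat, (N+K)%nat.
    replace (2 * S j + 1)%nat with (2 + (2*j+1))%nat by lia.
    rewrite pow_add, IH. rewrite !plus_INR, !mult_INR. simpl (INR 2).
    pose proof alpha_sq as H.
    replace (alpha ^ 2) with (1 - alpha) by (simpl; rewrite Rmult_1_r; lra).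
    replace ((1 - alpha) * (INR N * alpha - INR K)) with
      (INR N * alpha - INR K - INR N * (alpha * alpha) + INR K * alpha) by ring.
    rewrite H. ring.
Qed.

Lemma golden_approx : forall e, 0 < e -> exists N K : nat, 0 < INR N * alpha - INR K < e.
Proof.
  intros e He. pose proof alpha_bounds.
  assert (Ha : Rabs alpha < 1) by (rewrite Rabs_right; lra).
  destruct (pow_lt_1_zero alpha Ha e He) as [n0 Hn0].
  destruct (golden_pow n0) as [N [K HNK]].
  exists N, K. rewrite <- HNK. split.
  - apply pow_lt. lra.
  - specialize (Hn0 (2*n0+1)%nat ltac:(lia)).
    rewrite Rabs_right in Hn0; auto. left. apply pow_lt. lra.
Qed.

Lemma floor_nat : forall d t, 0 < d -> 0 <= t -> exists j : nat, INR j * d <= t < INR (S j) * d.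
Proof.
  intros d t Hd Ht.
  assert (Hex : exists n : nat, t < INR n * d).
  { destruct (archimed (t / d)) as [H1 H2].
    exists (Z.to_nat (up (t/d))).
    rewrite INR_IZR_INZ. rewrite Z2Nat.id.
    - assert (Et : t = (t/d)*d) by (field; lra). rewrite Et at 1.
      apply Rmult_lt_compat_r; lra.
    - apply le_IZR. assert (0 <= t / d) by (unfold Rdiv; apply Rmult_le_pos; [lra| left; apply Rinv_0_lt_compat; lra]). lra. }
  destruct Hex as [n Hn]. induction n as [|n IH].
  - simpl in Hn. lra.
  - destruct (Rlt_le_dec t (INR n * d)) as [H|H].
    + apply IH; auto.
    + exists n. split; auto.
Qed.

Lemma Rabs_le_inv : forall x d, Rabs x <= d -> -d <= x <= d.
Proof. intros x d H. unfold Rabs in H. destruct Rcase_abs; split; lra. Qed.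

Section Crit.
Variable T : IET.
Variables c0 c1 : Z.
Let c := IZR c0 + IZR c1 * alpha.
Hypothesis Hc0 : 0 <= c.
Hypothesis Hc1 : c + 1 <= len T.
Hypothesis Hrot1 : forall x, Good x -> c < x < c + 1 - alpha -> Reach T x (x + alpha).
Hypothesis Hrot2 : forall x, Good x -> c + 1 - alpha < x < c + 1 -> Reach T x (x + alpha - 1).
Hypothesis Hcov : forall y, 0 <= y <= len T -> exists a b s t y0,
       c <= a /\ a < b /\ b <= c + 1 /\ a <= y0 <= b /\ (s = 1 \/ s = -1) /\ y = s*y0 + t /\
       forall x, a < x < b -> Reach T x (s*x + t).

Let p := c + 1/2.

Lemma good_orb : forall (M : nat) (k : Z), Good (p + INR M * alpha - IZR k).
Proof.
  intros M k. unfold p, c.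
  replace (IZR c0 + IZR c1 * alpha + 1/2 + INR M * alpha - IZR k) with
    (IZR c0 + IZR c1 * alpha + 1/2 + IZR (-k) + IZR (Z.of_nat M) * alpha)
    by (rewrite opp_IZR, <- INR_IZR_INZ; ring).
  apply good_shift. apply good_half.
Qed.

Lemma orb_all : forall (M : nat) (k : Z), c < p + INR M * alpha - IZR k < c + 1 ->
  Reach T p (p + INR M * alpha - IZR k).
Proof.
  pose proof alpha_bounds.
  induction M as [|M IH]; intros k Hk.
  - simpl in *. unfold p in Hk.
    assert (k = 0%Z).
    { assert (IZR k < 1) by lra. assert (IZR (-1) < IZR k) by lra.
      apply lt_IZR in H0. apply lt_IZR in H1. lia. }
    subst. apply reach_refl. simpl. ring.
  - rewrite S_INR in *.
    set (x' := p + INR M * alpha - IZR k).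
    assert (Gx : Good x') by apply good_orb.
    destruct (good_split x' c0 c1 Gx) as [H1|H1].
    +
      assert (Hk' : c < p + INR M * alpha - IZR (k - 1) < c + 1)
        by (rewrite minus_IZR; unfold x', c in *; lra).
      specialize (IH _ Hk').
      eapply reach_trans; [exact IH|].
      replace (p + (INR M + 1) * alpha - IZR k) with
        ((p + INR M * alpha - IZR (k-1)) + alpha - 1) by (rewrite minus_IZR; ring).
      apply Hrot2.
      * replace (p + INR M * alpha - IZR (k - 1)) with (p + INR M * alpha - IZR k + IZR 1 + IZR 0 * alpha)
          by (rewrite minus_IZR; ring). apply good_shift. apply good_orb.
      * rewrite minus_IZR. unfold x', c in *. lra.
    + specialize (IH k ltac:(unfold x', c in *; lra)).
      eapply reach_trans; [exact IH|].
      replace (p + (INR M + 1) * alpha - IZR k) with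
        ((p + INR M * alpha - IZR k) + alpha) by ring.
      apply Hrot1; [exact Gx| unfold x', c in *; lra].
Qed.

Lemma dens_base : forall y, c <= y <= c + 1 -> forall e, 0 < e ->
  exists x, c < x < c + 1 /\ Reach T p x /\ Rabs (x - y) < e.
Proof.
  intros y Hy e He.
  destruct (golden_approx (Rmin e 1 / 2)) as [N [K HNK]].
  { assert (0 < Rmin e 1) by (apply Rmin_glb_lt; lra). lra. }
  set (d := INR N * alpha - INR K) in *.
  assert (Hd1 : d < e / 2 /\ d < 1/2).
  { pose proof (Rmin_l e 1); pose proof (Rmin_r e 1). lra. }
  set (y' := Rmax y (c + d)).
  assert (Hy' : c + d <= y' <= c + 1 /\ Rabs (y' - y) <= d).
  { unfold y', Rmax. destruct (Rle_dec y (c+d)); split; try split; try lra;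
    apply Rabs_le; lra. }
  assert (Gc1 : Good (IZR (c0+1) + IZR c1 * alpha) -> False).
  { intro G. apply (G (c0+1)%Z c1). reflexivity. }
  destruct (Rle_lt_dec 0 (y' - c - 1/2)) as [Hz|Hz].
  - destruct (floor_nat d (y' - c - 1/2) ltac:(lra) Hz) as [j Hj].
    rewrite S_INR in Hj.
    set (x := p + INR (j*N) * alpha - IZR (Z.of_nat (j*K))).
    assert (Ex : x = p + INR j * d) by (unfold x, d; rewrite <- INR_IZR_INZ, !mult_INR; ring).
    assert (Gx : Good x) by apply good_orb.
    assert (Hx1 : c < x <= c + 1) by (unfold p in Ex; lra).
    assert (Hx2 : x < c + 1).
    { destruct (good_split x (c0+1) c1 Gx) as [H|H]; rewrite plus_IZR in H; unfold c in *; lra. }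
    exists x. split; [lra|]. split.
    + apply orb_all. unfold x in Hx1, Hx2. lra.
    + destruct Hy' as [Hy'a Hy'b]. apply Rabs_le_inv in Hy'b. apply Rabs_def1; unfold p in Ex; lra.
  - assert (Hz' : 0 <= y' - c - 1/2 + 1) by lra.
    destruct (floor_nat d _ ltac:(lra) Hz') as [j Hj].
    rewrite S_INR in Hj.
    set (x := p + INR (j*N) * alpha - IZR (Z.of_nat (j*K) + 1)).
    assert (Ex : x = p + INR j * d - 1)
      by (unfold x, d; rewrite plus_IZR, <- INR_IZR_INZ, !mult_INR; ring).
    assert (Gx : Good x) by apply good_orb.
    assert (Hx1 : c < x <= c + 1) by (unfold p in Ex; lra).
    assert (Hx2 : x < c + 1).
    { destruct (good_split x (c0+1) c1 Gx) as [H|H]; rewrite plus_IZR in H; unfold c in *; lra. }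
    exists x. split; [lra|]. split.
    + apply orb_all. unfold x in Hx1, Hx2. lra.
    + destruct Hy' as [Hy'a Hy'b]. apply Rabs_le_inv in Hy'b. apply Rabs_def1; unfold p in Ex; lra.
Qed.

Lemma dens_sub : forall a b y0, c <= a -> a < b -> b <= c + 1 -> a <= y0 <= b ->
  forall e, 0 < e -> exists x, a < x < b /\ Reach T p x /\ Rabs (x - y0) < e.
Proof.
  intros a b y0 Ha Hab Hb Hy0 e He.
  set (e' := Rmin e (b - a) / 4).
  assert (He' : 0 < e' /\ e' <= e / 4 /\ e' <= (b-a)/4).
  { unfold e'. pose proof (Rmin_l e (b-a)); pose proof (Rmin_r e (b-a)).
    assert (0 < Rmin e (b-a)) by (apply Rmin_glb_lt; lra). lra. }
  set (y' := Rmax (a + e') (Rmin y0 (b - e'))).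
  assert (Hy' : a + e' <= y' <= b - e' /\ Rabs (y' - y0) <= e').
  { unfold y', Rmax, Rmin. destruct (Rle_dec y0 (b - e')); destruct (Rle_dec (a+e') _);
    split; try split; try lra; apply Rabs_le; lra. }
  destruct (dens_base y' ltac:(lra) e' ltac:(lra)) as [x [Hx1 [Hx2 Hx3]]].
  exists x. destruct Hy' as [Hy'a Hy'b]. apply Rabs_le_inv in Hy'b. apply Rabs_def2 in Hx3.
  split; [lra|]. split; auto. apply Rabs_def1; lra.
Qed.

Lemma transitive_crit : transitive T.
Proof.
  exists p. split; [unfold p; lra|].
  intros y Hy e He.
  destruct (Hcov y Hy) as [a [b [s [t [y0 [Ha [Hab [Hb [Hy0 [Hs [Ey Hr]]]]]]]]]]].
  destruct (dens_sub a b y0 Ha Hab Hb Hy0 e He) as [x [Hx1 [Hx2 Hx3]]].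
  exists (s*x + t). split.
  - destruct (Hx2) as [m Hm]. destruct (Hr x Hx1) as [k Hk].
    exists (m+k)%nat. left. eapply iter_trans; eauto.
  - apply Rabs_def2 in Hx3. apply Rabs_def1; destruct Hs; subst; lra.
Qed.
End Crit.

Definition img (T : IET) (i : nat) (x : R) : R :=
  if flip T i then bpt T (pi T i) - (x - apt T (i - 1))
  else bpt T (pi T i - 1) + (x - apt T (i - 1)).

Lemma Tmap_img : forall T i x, (1 <= i <= nI T)%nat -> apt T (i-1) < x < apt T i ->
  Tmap T x (img T i x).
Proof. intros. exists i. auto. Qed.

Lemma nonext_crit : forall T i, (1 <= i <= nI T - 1)%nat ->
  0 < lam T i -> 0 < lam T (S i) ->
  img T i (apt T i) <> img T (S i) (apt T i) ->
  ~ (exists y : R, forall eps, 0 < eps -> exists delta, 0 < delta /\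
         forall x z, Tmap T x z -> x <> apt T i -> Rabs (x - apt T i) < delta ->
           Rabs (z - y) < eps).
Proof.
  intros T i Hi Hl1 Hl2 Hne [y Hy].
  set (L := img T i (apt T i)). set (R0 := img T (S i) (apt T i)).
  assert (HLR : 0 < Rabs (L - R0)) by (apply Rabs_pos_lt; unfold L, R0; lra).
  destruct (Hy (Rabs (L - R0) / 4) ltac:(lra)) as [delta [Hd Hdel]].
  set (d := Rmin (Rmin delta (Rabs (L - R0) / 4)) (Rmin (lam T i) (lam T (S i))) / 2).
  assert (Hd' : 0 < d /\ d < delta /\ d < Rabs (L - R0) / 4 /\ d < lam T i /\ d < lam T (S i)).
  { unfold d. pose proof (Rmin_l (Rmin delta (Rabs (L - R0) / 4)) (Rmin (lam T i) (lam T (S i)))).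
    pose proof (Rmin_r (Rmin delta (Rabs (L - R0) / 4)) (Rmin (lam T i) (lam T (S i)))).
    pose proof (Rmin_l delta (Rabs (L - R0) / 4)). pose proof (Rmin_r delta (Rabs (L - R0) / 4)).
    pose proof (Rmin_l (lam T i) (lam T (S i))). pose proof (Rmin_r (lam T i) (lam T (S i))).
    assert (0 < Rmin (Rmin delta (Rabs (L - R0) / 4)) (Rmin (lam T i) (lam T (S i)))).
    { apply Rmin_glb_lt; apply Rmin_glb_lt; lra. }
    lra. }
  assert (Ea : apt T i = apt T (i - 1) + lam T i).
  { destruct i as [|i']; [lia|]. unfold apt. simpl. replace (i' - 0)%nat with i' by lia. reflexivity. }
  assert (Eb : apt T (S i) = apt T i + lam T (S i)) by reflexivity.
  assert (H1 := Hdel (apt T i - d) (img T i (apt T i - d))).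
  assert (H2 := Hdel (apt T i + d) (img T (S i) (apt T i + d))).
  assert (T1 : Tmap T (apt T i - d) (img T i (apt T i - d))) by (apply Tmap_img; [lia|lra]).
  assert (T2 : Tmap T (apt T i + d) (img T (S i) (apt T i + d))).
  { apply Tmap_img; [lia|]. replace (S i - 1)%nat with i by lia. lra. }
  specialize (H1 T1 ltac:(lra) ltac:(rewrite Rabs_left; lra)).
  specialize (H2 T2 ltac:(lra) ltac:(rewrite Rabs_right; lra)).
  assert (E1 : Rabs (img T i (apt T i - d) - L) = d).
  { unfold L, img. destruct (flip T i); [replace (_ - _) with d by ring| replace (_ - _) with (-d) by ring];
    [rewrite Rabs_right|rewrite Rabs_left1]; lra. }
  assert (E2 : Rabs (img T (S i) (apt T i + d) - R0) = d).
  { unfold R0, img. destruct (flip T (S i)); [replace (_ - _) with (-d) by ring| replace (_ - _) with d by ring];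
    [rewrite Rabs_left1|rewrite Rabs_right]; lra. }
  assert (Rabs (L - R0) <= Rabs (img T i (apt T i - d) - L) + Rabs (img T i (apt T i - d) - y)
      + Rabs (img T (S i) (apt T i + d) - y) + Rabs (img T (S i) (apt T i + d) - R0)).
  { unfold Rabs; repeat destruct Rcase_abs; lra. }
  lra.
Qed.
Definition E1 : IET := mkIET 4%nat (fun i => match i with 1%nat => (0 + 1 * alpha) | 2%nat => (1 + (-1) * alpha) | 3%nat => (1 + 0 * alpha) | 4%nat => (2 + 0 * alpha) | _ => 0 end) (fun i => match i with 1%nat => 3%nat | 2%nat => 2%nat | 3%nat => 4%nat | 4%nat => 1%nat | _ => 0%nat end) (fun i => match i with 1%nat => false | 2%nat => false | 3%nat => false | 4%nat => true | _ => false end).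

Lemma E1_m1 : forall x, (0 + 0 * alpha) < x < (0 + 1 * alpha) -> Tmap E1 x (1 * x + (3 + (-1) * alpha)).
Proof. intros x Hx. pose proof alpha_bounds. exists 1%nat. unfold apt, bpt; simpl. split; [lia|]. split; lra. Qed.

Lemma E1_m2 : forall x, (0 + 1 * alpha) < x < (1 + 0 * alpha) -> Tmap E1 x (1 * x + (2 + (-1) * alpha)).
Proof. intros x Hx. pose proof alpha_bounds. exists 2%nat. unfold apt, bpt; simpl. split; [lia|]. split; lra. Qed.

Lemma E1_m3 : forall x, (1 + 0 * alpha) < x < (2 + 0 * alpha) -> Tmap E1 x (1 * x + (2 + 0 * alpha)).
Proof. intros x Hx. pose proof alpha_bounds. exists 3%nat. unfold apt, bpt; simpl. split; [lia|]. split; lra. Qed.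

Lemma E1_m4 : forall x, (2 + 0 * alpha) < x < (4 + 0 * alpha) -> Tmap E1 x ((-1) * x + (4 + 0 * alpha)).
Proof. intros x Hx. pose proof alpha_bounds. exists 4%nat. unfold apt, bpt; simpl. split; [lia|]. split; lra. Qed.

Lemma E1_rot1 : forall x, Good x -> (1 + 0 * alpha) < x < (1 + 0 * alpha) + 1 - alpha -> Reach E1 x (x + alpha).
Proof.
  intros x Hg Hx. pose proof alpha_bounds.
  eapply reach_step; [apply E1_m3; lra|]. eapply reach_step; [apply E1_m4; lra|]. eapply reach_step; [apply E1_m2; lra|]. eapply reach_step; [apply E1_m4; lra|]. apply reach_refl; lra.
Qed.

Lemma E1_rot2 : forall x, Good x -> (1 + 0 * alpha) + 1 - alpha < x < (1 + 0 * alpha) + 1 -> Reach E1 x (x + alpha - 1).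
Proof.
  intros x Hg Hx. pose proof alpha_bounds.
  eapply reach_step; [apply E1_m3; lra|]. eapply reach_step; [apply E1_m4; lra|]. eapply reach_step; [apply E1_m1; lra|]. eapply reach_step; [apply E1_m4; lra|]. apply reach_refl; lra.
Qed.

Lemma E1_cov : forall y, 0 <= y <= len E1 -> exists a b s t y0,
       (1 + 0 * alpha) <= a /\ a < b /\ b <= (1 + 0 * alpha) + 1 /\ a <= y0 <= b /\ (s = 1 \/ s = -1) /\ y = s*y0 + t /\
       forall x, a < x < b -> Reach E1 x (s*x + t).
Proof.
  intros y Hy. unfold len in Hy; simpl in Hy. pose proof alpha_bounds.
  destruct (Rle_lt_dec y (0 + 1 * alpha)) as [Hl0|Hl0]. { exists (2 + (-1) * alpha), (2 + 0 * alpha), (-1), (2 + 0 * alpha), ((-1) * (y - (2 + 0 * alpha))). split; [lra|]. split; [lra|]. split; [lra|]. split; [lra|]. split; [right; reflexivity|]. split; [lra|]. intros x Hx. eapply reach_step; [apply E1_m3; lra|]. eapply reach_step; [apply E1_m4; lra|]. apply reach_refl; lra. }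
  destruct (Rle_lt_dec y (1 + 0 * alpha)) as [Hl1|Hl1]. { exists (1 + 0 * alpha), (2 + (-1) * alpha), (-1), (2 + 0 * alpha), ((-1) * (y - (2 + 0 * alpha))). split; [lra|]. split; [lra|]. split; [lra|]. split; [lra|]. split; [right; reflexivity|]. split; [lra|]. intros x Hx. eapply reach_step; [apply E1_m3; lra|]. eapply reach_step; [apply E1_m4; lra|]. apply reach_refl; lra. }
  destruct (Rle_lt_dec y (2 + (-1) * alpha)) as [Hl2|Hl2]. { exists (1 + 0 * alpha), (2 + (-1) * alpha), 1, (0 + 0 * alpha), (1 * (y - (0 + 0 * alpha))). split; [lra|]. split; [lra|]. split; [lra|]. split; [lra|]. split; [left; reflexivity|]. split; [lra|]. intros x Hx. apply reach_refl; lra. }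
  destruct (Rle_lt_dec y (2 + 0 * alpha)) as [Hl3|Hl3]. { exists (2 + (-1) * alpha), (2 + 0 * alpha), 1, (0 + 0 * alpha), (1 * (y - (0 + 0 * alpha))). split; [lra|]. split; [lra|]. split; [lra|]. split; [lra|]. split; [left; reflexivity|]. split; [lra|]. intros x Hx. apply reach_refl; lra. }
  destruct (Rle_lt_dec y (3 + (-1) * alpha)) as [Hl4|Hl4]. { exists (1 + 0 * alpha), (2 + (-1) * alpha), (-1), (4 + (-1) * alpha), ((-1) * (y - (4 + (-1) * alpha))). split; [lra|]. split; [lra|]. split; [lra|]. split; [lra|]. split; [right; reflexivity|]. split; [lra|]. intros x Hx. eapply reach_step; [apply E1_m3; lra|]. eapply reach_step; [apply E1_m4; lra|]. eapply reach_step; [apply E1_m2; lra|]. apply reach_refl; lra. }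
  destruct (Rle_lt_dec y (3 + 0 * alpha)) as [Hl5|Hl5]. { exists (2 + (-1) * alpha), (2 + 0 * alpha), (-1), (5 + (-1) * alpha), ((-1) * (y - (5 + (-1) * alpha))). split; [lra|]. split; [lra|]. split; [lra|]. split; [lra|]. split; [right; reflexivity|]. split; [lra|]. intros x Hx. eapply reach_step; [apply E1_m3; lra|]. eapply reach_step; [apply E1_m4; lra|]. eapply reach_step; [apply E1_m1; lra|]. apply reach_refl; lra. }
  destruct (Rle_lt_dec y (4 + (-1) * alpha)) as [Hl6|Hl6]. { exists (1 + 0 * alpha), (2 + (-1) * alpha), 1, (2 + 0 * alpha), (1 * (y - (2 + 0 * alpha))). split; [lra|]. split; [lra|]. split; [lra|]. split; [lra|]. split; [left; reflexivity|]. split; [lra|]. intros x Hx. eapply reach_step; [apply E1_m3; lra|]. apply reach_refl; lra. }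
  exists (2 + (-1) * alpha), (2 + 0 * alpha), 1, (2 + 0 * alpha), (1 * (y - (2 + 0 * alpha))). split; [lra|]. split; [lra|]. split; [lra|]. split; [lra|]. split; [left; reflexivity|]. split; [lra|]. intros x Hx. eapply reach_step; [apply E1_m3; lra|]. apply reach_refl; lra.
Qed.

Lemma E1_trans : transitive E1.
Proof.
  pose proof alpha_bounds.
  apply (transitive_crit E1 (1)%Z (0)%Z).
  - lra.
  - unfold len; simpl; lra.
  - exact E1_rot1.
  - exact E1_rot2.
  - exact E1_cov.
Qed.

Lemma E1_ok : is_IET E1.
Proof.
  pose proof alpha_bounds. split.
  - split; [|split].
    + intros i Hi; simpl in Hi. assert (i = 1%nat \/ i = 2%nat \/ i = 3%nat \/ i = 4%nat) as Hci by lia; destruct Hci as [-> | [-> | [-> | ->]]]; simpl; lra.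
    + intros i Hi; simpl in *. assert (i = 1%nat \/ i = 2%nat \/ i = 3%nat \/ i = 4%nat) as Hci by lia; destruct Hci as [-> | [-> | [-> | ->]]]; simpl; lia.
    + intros i j Hi Hj; simpl in *. assert (i = 1%nat \/ i = 2%nat \/ i = 3%nat \/ i = 4%nat) as Hci by lia; destruct Hci as [-> | [-> | [-> | ->]]]; assert (j = 1%nat \/ j = 2%nat \/ j = 3%nat \/ j = 4%nat) as Hcj by lia; destruct Hcj as [-> | [-> | [-> | ->]]]; simpl; intros; try lia; discriminate.
  - intros i Hi; simpl in Hi. assert (i = 1%nat \/ i = 2%nat \/ i = 3%nat) as Hci by lia; destruct Hci as [-> | [-> | ->]]; (apply nonext_crit; [simpl; lia|simpl; lra|simpl; lra|unfold img, apt, bpt; simpl; lra]).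
Qed.

Definition E2 : IET := mkIET 4%nat (fun i => match i with 1%nat => (0 + 1 * alpha) | 2%nat => (1 + (-1) * alpha) | 3%nat => (0 + 1 * alpha) | 4%nat => (1 + (-1) * alpha) | _ => 0 end) (fun i => match i with 1%nat => 2%nat | 2%nat => 4%nat | 3%nat => 1%nat | 4%nat => 3%nat | _ => 0%nat end) (fun i => match i with 1%nat => true | 2%nat => false | 3%nat => true | 4%nat => false | _ => false end).

Lemma E2_m1 : forall x, (0 + 0 * alpha) < x < (0 + 1 * alpha) -> Tmap E2 x ((-1) * x + (0 + 2 * alpha)).
Proof. intros x Hx. pose proof alpha_bounds. exists 1%nat. unfold apt, bpt; simpl. split; [lia|]. split; lra. Qed.

Lemma E2_m2 : forall x, (0 + 1 * alpha) < x < (1 + 0 * alpha) -> Tmap E2 x (1 * x + (1 + 0 * alpha)).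
Proof. intros x Hx. pose proof alpha_bounds. exists 2%nat. unfold apt, bpt; simpl. split; [lia|]. split; lra. Qed.

Lemma E2_m3 : forall x, (1 + 0 * alpha) < x < (1 + 1 * alpha) -> Tmap E2 x ((-1) * x + (1 + 1 * alpha)).
Proof. intros x Hx. pose proof alpha_bounds. exists 3%nat. unfold apt, bpt; simpl. split; [lia|]. split; lra. Qed.

Lemma E2_m4 : forall x, (1 + 1 * alpha) < x < (2 + 0 * alpha) -> Tmap E2 x (1 * x + ((-1) + 1 * alpha)).
Proof. intros x Hx. pose proof alpha_bounds. exists 4%nat. unfold apt, bpt; simpl. split; [lia|]. split; lra. Qed.

Lemma E2_rot1 : forall x, Good x -> (0 + 1 * alpha) < x < (0 + 1 * alpha) + 1 - alpha -> Reach E2 x (x + alpha).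
Proof.
  intros x Hg Hx. pose proof alpha_bounds.
  eapply reach_step; [apply E2_m2; lra|]. eapply reach_step; [apply E2_m4; lra|]. apply reach_refl; lra.
Qed.

Lemma E2_rot2 : forall x, Good x -> (0 + 1 * alpha) + 1 - alpha < x < (0 + 1 * alpha) + 1 -> Reach E2 x (x + alpha - 1).
Proof.
  intros x Hg Hx. pose proof alpha_bounds.
  eapply reach_step; [apply E2_m3; lra|]. eapply reach_step; [apply E2_m1; lra|]. apply reach_refl; lra.
Qed.

Lemma E2_cov : forall y, 0 <= y <= len E2 -> exists a b s t y0,
       (0 + 1 * alpha) <= a /\ a < b /\ b <= (0 + 1 * alpha) + 1 /\ a <= y0 <= b /\ (s = 1 \/ s = -1) /\ y = s*y0 + t /\
       forall x, a < x < b -> Reach E2 x (s*x + t).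
Proof.
  intros y Hy. unfold len in Hy; simpl in Hy. pose proof alpha_bounds.
  destruct (Rle_lt_dec y (0 + 1 * alpha)) as [Hl0|Hl0]. { exists (1 + 0 * alpha), (1 + 1 * alpha), (-1), (1 + 1 * alpha), ((-1) * (y - (1 + 1 * alpha))). split; [lra|]. split; [lra|]. split; [lra|]. split; [lra|]. split; [right; reflexivity|]. split; [lra|]. intros x Hx. eapply reach_step; [apply E2_m3; lra|]. apply reach_refl; lra. }
  destruct (Rle_lt_dec y (1 + 0 * alpha)) as [Hl1|Hl1]. { exists (0 + 1 * alpha), (1 + 0 * alpha), 1, (0 + 0 * alpha), (1 * (y - (0 + 0 * alpha))). split; [lra|]. split; [lra|]. split; [lra|]. split; [lra|]. split; [left; reflexivity|]. split; [lra|]. intros x Hx. apply reach_refl; lra. }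
  destruct (Rle_lt_dec y (1 + 1 * alpha)) as [Hl2|Hl2]. { exists (1 + 0 * alpha), (1 + 1 * alpha), 1, (0 + 0 * alpha), (1 * (y - (0 + 0 * alpha))). split; [lra|]. split; [lra|]. split; [lra|]. split; [lra|]. split; [left; reflexivity|]. split; [lra|]. intros x Hx. apply reach_refl; lra. }
  exists (0 + 1 * alpha), (1 + 0 * alpha), 1, (1 + 0 * alpha), (1 * (y - (1 + 0 * alpha))). split; [lra|]. split; [lra|]. split; [lra|]. split; [lra|]. split; [left; reflexivity|]. split; [lra|]. intros x Hx. eapply reach_step; [apply E2_m2; lra|]. apply reach_refl; lra.
Qed.

Lemma E2_trans : transitive E2.
Proof.
  pose proof alpha_bounds.
  apply (transitive_crit E2 (0)%Z (1)%Z).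
  - lra.
  - unfold len; simpl; lra.
  - exact E2_rot1.
  - exact E2_rot2.
  - exact E2_cov.
Qed.

Lemma E2_ok : is_IET E2.
Proof.
  pose proof alpha_bounds. split.
  - split; [|split].
    + intros i Hi; simpl in Hi. assert (i = 1%nat \/ i = 2%nat \/ i = 3%nat \/ i = 4%nat) as Hci by lia; destruct Hci as [-> | [-> | [-> | ->]]]; simpl; lra.
    + intros i Hi; simpl in *. assert (i = 1%nat \/ i = 2%nat \/ i = 3%nat \/ i = 4%nat) as Hci by lia; destruct Hci as [-> | [-> | [-> | ->]]]; simpl; lia.
    + intros i j Hi Hj; simpl in *. assert (i = 1%nat \/ i = 2%nat \/ i = 3%nat \/ i = 4%nat) as Hci by lia; destruct Hci as [-> | [-> | [-> | ->]]]; assert (j = 1%nat \/ j = 2%nat \/ j = 3%nat \/ j = 4%nat) as Hcj by lia; destruct Hcj as [-> | [-> | [-> | ->]]]; simpl; intros; try lia; discriminate.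
  - intros i Hi; simpl in Hi. assert (i = 1%nat \/ i = 2%nat \/ i = 3%nat) as Hci by lia; destruct Hci as [-> | [-> | ->]]; (apply nonext_crit; [simpl; lia|simpl; lra|simpl; lra|unfold img, apt, bpt; simpl; lra]).
Qed.

Definition E3 : IET := mkIET 4%nat (fun i => match i with 1%nat => (0 + 1 * alpha) | 2%nat => (3 + 0 * alpha) | 3%nat => (1 + (-1) * alpha) | 4%nat => (1 + 0 * alpha) | _ => 0 end) (fun i => match i with 1%nat => 2%nat | 2%nat => 3%nat | 3%nat => 4%nat | 4%nat => 1%nat | _ => 0%nat end) (fun i => match i with 1%nat => true | 2%nat => false | 3%nat => true | 4%nat => true | _ => false end).

Lemma E3_m1 : forall x, (0 + 0 * alpha) < x < (0 + 1 * alpha) -> Tmap E3 x ((-1) * x + (1 + 1 * alpha)).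
Proof. intros x Hx. pose proof alpha_bounds. exists 1%nat. unfold apt, bpt; simpl. split; [lia|]. split; lra. Qed.

Lemma E3_m2 : forall x, (0 + 1 * alpha) < x < (3 + 1 * alpha) -> Tmap E3 x (1 * x + (1 + 0 * alpha)).
Proof. intros x Hx. pose proof alpha_bounds. exists 2%nat. unfold apt, bpt; simpl. split; [lia|]. split; lra. Qed.

Lemma E3_m3 : forall x, (3 + 1 * alpha) < x < (4 + 0 * alpha) -> Tmap E3 x ((-1) * x + (8 + 1 * alpha)).
Proof. intros x Hx. pose proof alpha_bounds. exists 3%nat. unfold apt, bpt; simpl. split; [lia|]. split; lra. Qed.

Lemma E3_m4 : forall x, (4 + 0 * alpha) < x < (5 + 0 * alpha) -> Tmap E3 x ((-1) * x + (5 + 0 * alpha)).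
Proof. intros x Hx. pose proof alpha_bounds. exists 4%nat. unfold apt, bpt; simpl. split; [lia|]. split; lra. Qed.

Lemma E3_rot1 : forall x, Good x -> (4 + 0 * alpha) < x < (4 + 0 * alpha) + 1 - alpha -> Reach E3 x (x + alpha).
Proof.
  intros x Hg Hx. pose proof alpha_bounds.
  eapply reach_step; [apply E3_m4; lra|]. eapply reach_step; [apply E3_m2; lra|]. eapply reach_step; [apply E3_m2; lra|]. eapply reach_step; [apply E3_m2; lra|]. eapply reach_step; [apply E3_m3; lra|]. apply reach_refl; lra.
Qed.

Lemma E3_rot2 : forall x, Good x -> (4 + 0 * alpha) + 1 - alpha < x < (4 + 0 * alpha) + 1 -> Reach E3 x (x + alpha - 1).
Proof.
  intros x Hg Hx. pose proof alpha_bounds.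
  eapply reach_step; [apply E3_m4; lra|]. eapply reach_step; [apply E3_m1; lra|]. eapply reach_step; [apply E3_m2; lra|]. eapply reach_step; [apply E3_m2; lra|]. eapply reach_step; [apply E3_m2; lra|]. apply reach_refl; lra.
Qed.

Lemma E3_cov : forall y, 0 <= y <= len E3 -> exists a b s t y0,
       (4 + 0 * alpha) <= a /\ a < b /\ b <= (4 + 0 * alpha) + 1 /\ a <= y0 <= b /\ (s = 1 \/ s = -1) /\ y = s*y0 + t /\
       forall x, a < x < b -> Reach E3 x (s*x + t).
Proof.
  intros y Hy. unfold len in Hy; simpl in Hy. pose proof alpha_bounds.
  destruct (Rle_lt_dec y (0 + 1 * alpha)) as [Hl0|Hl0]. { exists (5 + (-1) * alpha), (5 + 0 * alpha), (-1), (5 + 0 * alpha), ((-1) * (y - (5 + 0 * alpha))). split; [lra|]. split; [lra|]. split; [lra|]. split; [lra|]. split; [right; reflexivity|]. split; [lra|]. intros x Hx. eapply reach_step; [apply E3_m4; lra|]. apply reach_refl; lra. }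
  destruct (Rle_lt_dec y (1 + 0 * alpha)) as [Hl1|Hl1]. { exists (4 + 0 * alpha), (5 + (-1) * alpha), (-1), (5 + 0 * alpha), ((-1) * (y - (5 + 0 * alpha))). split; [lra|]. split; [lra|]. split; [lra|]. split; [lra|]. split; [right; reflexivity|]. split; [lra|]. intros x Hx. eapply reach_step; [apply E3_m4; lra|]. apply reach_refl; lra. }
  destruct (Rle_lt_dec y (1 + 1 * alpha)) as [Hl2|Hl2]. { exists (5 + (-1) * alpha), (5 + 0 * alpha), 1, ((-4) + 1 * alpha), (1 * (y - ((-4) + 1 * alpha))). split; [lra|]. split; [lra|]. split; [lra|]. split; [lra|]. split; [left; reflexivity|]. split; [lra|]. intros x Hx. eapply reach_step; [apply E3_m4; lra|]. eapply reach_step; [apply E3_m1; lra|]. apply reach_refl; lra. }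
  destruct (Rle_lt_dec y (2 + 0 * alpha)) as [Hl3|Hl3]. { exists (4 + 0 * alpha), (5 + (-1) * alpha), (-1), (6 + 0 * alpha), ((-1) * (y - (6 + 0 * alpha))). split; [lra|]. split; [lra|]. split; [lra|]. split; [lra|]. split; [right; reflexivity|]. split; [lra|]. intros x Hx. eapply reach_step; [apply E3_m4; lra|]. eapply reach_step; [apply E3_m2; lra|]. apply reach_refl; lra. }
  destruct (Rle_lt_dec y (2 + 1 * alpha)) as [Hl4|Hl4]. { exists (5 + (-1) * alpha), (5 + 0 * alpha), 1, ((-3) + 1 * alpha), (1 * (y - ((-3) + 1 * alpha))). split; [lra|]. split; [lra|]. split; [lra|]. split; [lra|]. split; [left; reflexivity|]. split; [lra|]. intros x Hx. eapply reach_step; [apply E3_m4; lra|]. eapply reach_step; [apply E3_m1; lra|]. eapply reach_step; [apply E3_m2; lra|]. apply reach_refl; lra. }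
  destruct (Rle_lt_dec y (3 + 0 * alpha)) as [Hl5|Hl5]. { exists (4 + 0 * alpha), (5 + (-1) * alpha), (-1), (7 + 0 * alpha), ((-1) * (y - (7 + 0 * alpha))). split; [lra|]. split; [lra|]. split; [lra|]. split; [lra|]. split; [right; reflexivity|]. split; [lra|]. intros x Hx. eapply reach_step; [apply E3_m4; lra|]. eapply reach_step; [apply E3_m2; lra|]. eapply reach_step; [apply E3_m2; lra|]. apply reach_refl; lra. }
  destruct (Rle_lt_dec y (3 + 1 * alpha)) as [Hl6|Hl6]. { exists (5 + (-1) * alpha), (5 + 0 * alpha), 1, ((-2) + 1 * alpha), (1 * (y - ((-2) + 1 * alpha))). split; [lra|]. split; [lra|]. split; [lra|]. split; [lra|]. split; [left; reflexivity|]. split; [lra|]. intros x Hx. eapply reach_step; [apply E3_m4; lra|]. eapply reach_step; [apply E3_m1; lra|]. eapply reach_step; [apply E3_m2; lra|]. eapply reach_step; [apply E3_m2; lra|]. apply reach_refl; lra. }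
  destruct (Rle_lt_dec y (4 + 0 * alpha)) as [Hl7|Hl7]. { exists (4 + 0 * alpha), (5 + (-1) * alpha), (-1), (8 + 0 * alpha), ((-1) * (y - (8 + 0 * alpha))). split; [lra|]. split; [lra|]. split; [lra|]. split; [lra|]. split; [right; reflexivity|]. split; [lra|]. intros x Hx. eapply reach_step; [apply E3_m4; lra|]. eapply reach_step; [apply E3_m2; lra|]. eapply reach_step; [apply E3_m2; lra|]. eapply reach_step; [apply E3_m2; lra|]. apply reach_refl; lra. }
  destruct (Rle_lt_dec y (5 + (-1) * alpha)) as [Hl8|Hl8]. { exists (4 + 0 * alpha), (5 + (-1) * alpha), 1, (0 + 0 * alpha), (1 * (y - (0 + 0 * alpha))). split; [lra|]. split; [lra|]. split; [lra|]. split; [lra|]. split; [left; reflexivity|]. split; [lra|]. intros x Hx. apply reach_refl; lra. }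
  exists (5 + (-1) * alpha), (5 + 0 * alpha), 1, (0 + 0 * alpha), (1 * (y - (0 + 0 * alpha))). split; [lra|]. split; [lra|]. split; [lra|]. split; [lra|]. split; [left; reflexivity|]. split; [lra|]. intros x Hx. apply reach_refl; lra.
Qed.

Lemma E3_trans : transitive E3.
Proof.
  pose proof alpha_bounds.
  apply (transitive_crit E3 (4)%Z (0)%Z).
  - lra.
  - unfold len; simpl; lra.
  - exact E3_rot1.
  - exact E3_rot2.
  - exact E3_cov.
Qed.

Lemma E3_ok : is_IET E3.
Proof.
  pose proof alpha_bounds. split.
  - split; [|split].
    + intros i Hi; simpl in Hi. assert (i = 1%nat \/ i = 2%nat \/ i = 3%nat \/ i = 4%nat) as Hci by lia; destruct Hci as [-> | [-> | [-> | ->]]]; simpl; lra.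
    + intros i Hi; simpl in *. assert (i = 1%nat \/ i = 2%nat \/ i = 3%nat \/ i = 4%nat) as Hci by lia; destruct Hci as [-> | [-> | [-> | ->]]]; simpl; lia.
    + intros i j Hi Hj; simpl in *. assert (i = 1%nat \/ i = 2%nat \/ i = 3%nat \/ i = 4%nat) as Hci by lia; destruct Hci as [-> | [-> | [-> | ->]]]; assert (j = 1%nat \/ j = 2%nat \/ j = 3%nat \/ j = 4%nat) as Hcj by lia; destruct Hcj as [-> | [-> | [-> | ->]]]; simpl; intros; try lia; discriminate.
  - intros i Hi; simpl in Hi. assert (i = 1%nat \/ i = 2%nat \/ i = 3%nat) as Hci by lia; destruct Hci as [-> | [-> | ->]]; (apply nonext_crit; [simpl; lia|simpl; lra|simpl; lra|unfold img, apt, bpt; simpl; lra]).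
Qed.

Definition E4 : IET := mkIET 5%nat (fun i => match i with 1%nat => (2 + (-2) * alpha) | 2%nat => (1 + 0 * alpha) | 3%nat => (0 + 2 * alpha) | 4%nat => (3 + (-3) * alpha) | 5%nat => (0 + 3 * alpha) | _ => 0 end) (fun i => match i with 1%nat => 3%nat | 2%nat => 4%nat | 3%nat => 5%nat | 4%nat => 1%nat | 5%nat => 2%nat | _ => 0%nat end) (fun i => match i with 1%nat => true | 2%nat => true | 3%nat => true | 4%nat => true | 5%nat => true | _ => false end).

Lemma E4_m1 : forall x, (0 + 0 * alpha) < x < (2 + (-2) * alpha) -> Tmap E4 x ((-1) * x + (5 + (-2) * alpha)).
Proof. intros x Hx. pose proof alpha_bounds. exists 1%nat. unfold apt, bpt; simpl. split; [lia|]. split; lra. Qed.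

Lemma E4_m2 : forall x, (2 + (-2) * alpha) < x < (3 + (-2) * alpha) -> Tmap E4 x ((-1) * x + (8 + (-4) * alpha)).
Proof. intros x Hx. pose proof alpha_bounds. exists 2%nat. unfold apt, bpt; simpl. split; [lia|]. split; lra. Qed.

Lemma E4_m3 : forall x, (3 + (-2) * alpha) < x < (3 + 0 * alpha) -> Tmap E4 x ((-1) * x + (9 + (-2) * alpha)).
Proof. intros x Hx. pose proof alpha_bounds. exists 3%nat. unfold apt, bpt; simpl. split; [lia|]. split; lra. Qed.

Lemma E4_m4 : forall x, (3 + 0 * alpha) < x < (6 + (-3) * alpha) -> Tmap E4 x ((-1) * x + (6 + (-3) * alpha)).
Proof. intros x Hx. pose proof alpha_bounds. exists 4%nat. unfold apt, bpt; simpl. split; [lia|]. split; lra. Qed.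

Lemma E4_m5 : forall x, (6 + (-3) * alpha) < x < (6 + 0 * alpha) -> Tmap E4 x ((-1) * x + (9 + (-3) * alpha)).
Proof. intros x Hx. pose proof alpha_bounds. exists 5%nat. unfold apt, bpt; simpl. split; [lia|]. split; lra. Qed.

Lemma E4_rot1 : forall x, Good x -> (5 + (-2) * alpha) < x < (5 + (-2) * alpha) + 1 - alpha -> Reach E4 x (x + alpha).
Proof.
  intros x Hg Hx. pose proof alpha_bounds.
  eapply reach_step; [apply E4_m4; lra|]. eapply reach_step; [apply E4_m1; lra|]. eapply reach_step; [apply E4_m4; lra|]. eapply reach_step; [apply E4_m1; lra|]. eapply reach_step; [apply E4_m4; lra|]. eapply reach_step; [apply E4_m2; lra|]. apply reach_refl; lra.
Qed.

Lemma E4_rot2 : forall x, Good x -> (5 + (-2) * alpha) + 1 - alpha < x < (5 + (-2) * alpha) + 1 -> Reach E4 x (x + alpha - 1).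
Proof.
  intros x Hg Hx. pose proof alpha_bounds.
  eapply reach_step; [apply E4_m5; lra|]. eapply reach_step; [apply E4_m3; lra|]. eapply reach_step; [apply E4_m5; lra|]. eapply reach_step; [apply E4_m3; lra|]. eapply reach_step; [apply E4_m5; lra|]. eapply reach_step; [apply E4_m2; lra|]. apply reach_refl; lra.
Qed.

Lemma E4_cov : forall y, 0 <= y <= len E4 -> exists a b s t y0,
       (5 + (-2) * alpha) <= a /\ a < b /\ b <= (5 + (-2) * alpha) + 1 /\ a <= y0 <= b /\ (s = 1 \/ s = -1) /\ y = s*y0 + t /\
       forall x, a < x < b -> Reach E4 x (s*x + t).
Proof.
  intros y Hy. unfold len in Hy; simpl in Hy. pose proof alpha_bounds.
  destruct (Rle_lt_dec y (1 + (-1) * alpha)) as [Hl0|Hl0]. { exists (5 + (-2) * alpha), (6 + (-3) * alpha), (-1), (6 + (-3) * alpha), ((-1) * (y - (6 + (-3) * alpha))). split; [lra|]. split; [lra|]. split; [lra|]. split; [lra|]. split; [right; reflexivity|]. split; [lra|]. intros x Hx. eapply reach_step; [apply E4_m4; lra|]. apply reach_refl; lra. }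
  destruct (Rle_lt_dec y (2 + (-2) * alpha)) as [Hl1|Hl1]. { exists (5 + (-2) * alpha), (6 + (-3) * alpha), (-1), (7 + (-4) * alpha), ((-1) * (y - (7 + (-4) * alpha))). split; [lra|]. split; [lra|]. split; [lra|]. split; [lra|]. split; [right; reflexivity|]. split; [lra|]. intros x Hx. eapply reach_step; [apply E4_m4; lra|]. eapply reach_step; [apply E4_m1; lra|]. eapply reach_step; [apply E4_m4; lra|]. apply reach_refl; lra. }
  destruct (Rle_lt_dec y (3 + (-3) * alpha)) as [Hl2|Hl2]. { exists (5 + (-2) * alpha), (6 + (-3) * alpha), (-1), (8 + (-5) * alpha), ((-1) * (y - (8 + (-5) * alpha))). split; [lra|]. split; [lra|]. split; [lra|]. split; [lra|]. split; [right; reflexivity|]. split; [lra|]. intros x Hx. eapply reach_step; [apply E4_m4; lra|]. eapply reach_step; [apply E4_m1; lra|]. eapply reach_step; [apply E4_m4; lra|]. eapply reach_step; [apply E4_m1; lra|]. eapply reach_step; [apply E4_m4; lra|]. apply reach_refl; lra. }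
  destruct (Rle_lt_dec y (3 + (-2) * alpha)) as [Hl3|Hl3]. { exists (6 + (-3) * alpha), (6 + (-2) * alpha), (-1), (9 + (-5) * alpha), ((-1) * (y - (9 + (-5) * alpha))). split; [lra|]. split; [lra|]. split; [lra|]. split; [lra|]. split; [right; reflexivity|]. split; [lra|]. intros x Hx. eapply reach_step; [apply E4_m5; lra|]. eapply reach_step; [apply E4_m3; lra|]. eapply reach_step; [apply E4_m5; lra|]. eapply reach_step; [apply E4_m3; lra|]. eapply reach_step; [apply E4_m5; lra|]. apply reach_refl; lra. }
  destruct (Rle_lt_dec y (3 + (-1) * alpha)) as [Hl4|Hl4]. { exists (6 + (-3) * alpha), (6 + (-2) * alpha), (-1), (9 + (-4) * alpha), ((-1) * (y - (9 + (-4) * alpha))). split; [lra|]. split; [lra|]. split; [lra|]. split; [lra|]. split; [right; reflexivity|]. split; [lra|]. intros x Hx. eapply reach_step; [apply E4_m5; lra|]. eapply reach_step; [apply E4_m3; lra|]. eapply reach_step; [apply E4_m5; lra|]. apply reach_refl; lra. }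
  destruct (Rle_lt_dec y (3 + 0 * alpha)) as [Hl5|Hl5]. { exists (6 + (-3) * alpha), (6 + (-2) * alpha), (-1), (9 + (-3) * alpha), ((-1) * (y - (9 + (-3) * alpha))). split; [lra|]. split; [lra|]. split; [lra|]. split; [lra|]. split; [right; reflexivity|]. split; [lra|]. intros x Hx. eapply reach_step; [apply E4_m5; lra|]. apply reach_refl; lra. }
  destruct (Rle_lt_dec y (4 + (-1) * alpha)) as [Hl6|Hl6]. { exists (5 + (-2) * alpha), (6 + (-3) * alpha), 1, ((-2) + 2 * alpha), (1 * (y - ((-2) + 2 * alpha))). split; [lra|]. split; [lra|]. split; [lra|]. split; [lra|]. split; [left; reflexivity|]. split; [lra|]. intros x Hx. eapply reach_step; [apply E4_m4; lra|]. eapply reach_step; [apply E4_m1; lra|]. eapply reach_step; [apply E4_m4; lra|]. eapply reach_step; [apply E4_m1; lra|]. apply reach_refl; lra. }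
  destruct (Rle_lt_dec y (5 + (-2) * alpha)) as [Hl7|Hl7]. { exists (5 + (-2) * alpha), (6 + (-3) * alpha), 1, ((-1) + 1 * alpha), (1 * (y - ((-1) + 1 * alpha))). split; [lra|]. split; [lra|]. split; [lra|]. split; [lra|]. split; [left; reflexivity|]. split; [lra|]. intros x Hx. eapply reach_step; [apply E4_m4; lra|]. eapply reach_step; [apply E4_m1; lra|]. apply reach_refl; lra. }
  destruct (Rle_lt_dec y (6 + (-3) * alpha)) as [Hl8|Hl8]. { exists (5 + (-2) * alpha), (6 + (-3) * alpha), 1, (0 + 0 * alpha), (1 * (y - (0 + 0 * alpha))). split; [lra|]. split; [lra|]. split; [lra|]. split; [lra|]. split; [left; reflexivity|]. split; [lra|]. intros x Hx. apply reach_refl; lra. }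
  destruct (Rle_lt_dec y (6 + (-2) * alpha)) as [Hl9|Hl9]. { exists (6 + (-3) * alpha), (6 + (-2) * alpha), 1, (0 + 0 * alpha), (1 * (y - (0 + 0 * alpha))). split; [lra|]. split; [lra|]. split; [lra|]. split; [lra|]. split; [left; reflexivity|]. split; [lra|]. intros x Hx. apply reach_refl; lra. }
  destruct (Rle_lt_dec y (6 + (-1) * alpha)) as [Hl10|Hl10]. { exists (6 + (-3) * alpha), (6 + (-2) * alpha), 1, (0 + 1 * alpha), (1 * (y - (0 + 1 * alpha))). split; [lra|]. split; [lra|]. split; [lra|]. split; [lra|]. split; [left; reflexivity|]. split; [lra|]. intros x Hx. eapply reach_step; [apply E4_m5; lra|]. eapply reach_step; [apply E4_m3; lra|]. apply reach_refl; lra. }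
  exists (6 + (-3) * alpha), (6 + (-2) * alpha), 1, (0 + 2 * alpha), (1 * (y - (0 + 2 * alpha))). split; [lra|]. split; [lra|]. split; [lra|]. split; [lra|]. split; [left; reflexivity|]. split; [lra|]. intros x Hx. eapply reach_step; [apply E4_m5; lra|]. eapply reach_step; [apply E4_m3; lra|]. eapply reach_step; [apply E4_m5; lra|]. eapply reach_step; [apply E4_m3; lra|]. apply reach_refl; lra.
Qed.

Lemma E4_trans : transitive E4.
Proof.
  pose proof alpha_bounds.
  apply (transitive_crit E4 (5)%Z (-2)%Z).
  - lra.
  - unfold len; simpl; lra.
  - exact E4_rot1.
  - exact E4_rot2.
  - exact E4_cov.
Qed.

Lemma E4_ok : is_IET E4.
Proof.
  pose proof alpha_bounds. split.
  - split; [|split].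
    + intros i Hi; simpl in Hi. assert (i = 1%nat \/ i = 2%nat \/ i = 3%nat \/ i = 4%nat \/ i = 5%nat) as Hci by lia; destruct Hci as [-> | [-> | [-> | [-> | ->]]]]; simpl; lra.
    + intros i Hi; simpl in *. assert (i = 1%nat \/ i = 2%nat \/ i = 3%nat \/ i = 4%nat \/ i = 5%nat) as Hci by lia; destruct Hci as [-> | [-> | [-> | [-> | ->]]]]; simpl; lia.
    + intros i j Hi Hj; simpl in *. assert (i = 1%nat \/ i = 2%nat \/ i = 3%nat \/ i = 4%nat \/ i = 5%nat) as Hci by lia; destruct Hci as [-> | [-> | [-> | [-> | ->]]]]; assert (j = 1%nat \/ j = 2%nat \/ j = 3%nat \/ j = 4%nat \/ j = 5%nat) as Hcj by lia; destruct Hcj as [-> | [-> | [-> | [-> | ->]]]]; simpl; intros; try lia; discriminate.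
  - intros i Hi; simpl in Hi. assert (i = 1%nat \/ i = 2%nat \/ i = 3%nat \/ i = 4%nat) as Hci by lia; destruct Hci as [-> | [-> | [-> | ->]]]; (apply nonext_crit; [simpl; lia|simpl; lra|simpl; lra|unfold img, apt, bpt; simpl; lra]).
Qed.

Definition E5 : IET := mkIET 5%nat (fun i => match i with 1%nat => (2 + (-2) * alpha) | 2%nat => (0 + 2 * alpha) | 3%nat => (1 + (-1) * alpha) | 4%nat => (0 + 1 * alpha) | 5%nat => (1 + 0 * alpha) | _ => 0 end) (fun i => match i with 1%nat => 3%nat | 2%nat => 5%nat | 3%nat => 1%nat | 4%nat => 2%nat | 5%nat => 4%nat | _ => 0%nat end) (fun i => match i with 1%nat => true | 2%nat => true | 3%nat => true | 4%nat => true | 5%nat => true | _ => false end).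

Lemma E5_m1 : forall x, (0 + 0 * alpha) < x < (2 + (-2) * alpha) -> Tmap E5 x ((-1) * x + (3 + (-2) * alpha)).
Proof. intros x Hx. pose proof alpha_bounds. exists 1%nat. unfold apt, bpt; simpl. split; [lia|]. split; lra. Qed.

Lemma E5_m2 : forall x, (2 + (-2) * alpha) < x < (2 + 0 * alpha) -> Tmap E5 x ((-1) * x + (6 + (-2) * alpha)).
Proof. intros x Hx. pose proof alpha_bounds. exists 2%nat. unfold apt, bpt; simpl. split; [lia|]. split; lra. Qed.

Lemma E5_m3 : forall x, (2 + 0 * alpha) < x < (3 + (-1) * alpha) -> Tmap E5 x ((-1) * x + (3 + (-1) * alpha)).
Proof. intros x Hx. pose proof alpha_bounds. exists 3%nat. unfold apt, bpt; simpl. split; [lia|]. split; lra. Qed.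

Lemma E5_m4 : forall x, (3 + (-1) * alpha) < x < (3 + 0 * alpha) -> Tmap E5 x ((-1) * x + (4 + (-1) * alpha)).
Proof. intros x Hx. pose proof alpha_bounds. exists 4%nat. unfold apt, bpt; simpl. split; [lia|]. split; lra. Qed.

Lemma E5_m5 : forall x, (3 + 0 * alpha) < x < (4 + 0 * alpha) -> Tmap E5 x ((-1) * x + (7 + (-2) * alpha)).
Proof. intros x Hx. pose proof alpha_bounds. exists 5%nat. unfold apt, bpt; simpl. split; [lia|]. split; lra. Qed.

Lemma E5_rot1 : forall x, Good x -> (0 + 0 * alpha) < x < (0 + 0 * alpha) + 1 - alpha -> Reach E5 x (x + alpha).
Proof.
  intros x Hg Hx. pose proof alpha_bounds.
  eapply reach_step; [apply E5_m1; lra|]. eapply reach_step; [apply E5_m2; lra|]. eapply reach_step; [apply E5_m5; lra|]. eapply reach_step; [apply E5_m4; lra|]. apply reach_refl; lra.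
Qed.

Lemma E5_rot2 : forall x, Good x -> (0 + 0 * alpha) + 1 - alpha < x < (0 + 0 * alpha) + 1 -> Reach E5 x (x + alpha - 1).
Proof.
  intros x Hg Hx. pose proof alpha_bounds.
  destruct (good_split x (2)%Z (-2)%Z Hg) as [Hw0|Hw0]. { eapply reach_step; [apply E5_m1; lra|]. eapply reach_step; [apply E5_m2; lra|]. eapply reach_step; [apply E5_m5; lra|]. eapply reach_step; [apply E5_m3; lra|]. apply reach_refl; lra. }
  eapply reach_step; [apply E5_m2; lra|]. eapply reach_step; [apply E5_m5; lra|]. eapply reach_step; [apply E5_m2; lra|]. eapply reach_step; [apply E5_m4; lra|]. apply reach_refl; lra.
Qed.

Lemma E5_cov : forall y, 0 <= y <= len E5 -> exists a b s t y0,
       (0 + 0 * alpha) <= a /\ a < b /\ b <= (0 + 0 * alpha) + 1 /\ a <= y0 <= b /\ (s = 1 \/ s = -1) /\ y = s*y0 + t /\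
       forall x, a < x < b -> Reach E5 x (s*x + t).
Proof.
  intros y Hy. unfold len in Hy; simpl in Hy. pose proof alpha_bounds.
  destruct (Rle_lt_dec y (1 + (-1) * alpha)) as [Hl0|Hl0]. { exists (0 + 0 * alpha), (1 + (-1) * alpha), 1, (0 + 0 * alpha), (1 * (y - (0 + 0 * alpha))). split; [lra|]. split; [lra|]. split; [lra|]. split; [lra|]. split; [left; reflexivity|]. split; [lra|]. intros x Hx. apply reach_refl; lra. }
  destruct (Rle_lt_dec y (2 + (-2) * alpha)) as [Hl1|Hl1]. { exists (1 + (-1) * alpha), (2 + (-2) * alpha), 1, (0 + 0 * alpha), (1 * (y - (0 + 0 * alpha))). split; [lra|]. split; [lra|]. split; [lra|]. split; [lra|]. split; [left; reflexivity|]. split; [lra|]. intros x Hx. apply reach_refl; lra. }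
  destruct (Rle_lt_dec y (1 + 0 * alpha)) as [Hl2|Hl2]. { exists (2 + (-2) * alpha), (1 + 0 * alpha), 1, (0 + 0 * alpha), (1 * (y - (0 + 0 * alpha))). split; [lra|]. split; [lra|]. split; [lra|]. split; [lra|]. split; [left; reflexivity|]. split; [lra|]. intros x Hx. apply reach_refl; lra. }
  destruct (Rle_lt_dec y (2 + (-1) * alpha)) as [Hl3|Hl3]. { exists (1 + (-1) * alpha), (2 + (-2) * alpha), (-1), (3 + (-2) * alpha), ((-1) * (y - (3 + (-2) * alpha))). split; [lra|]. split; [lra|]. split; [lra|]. split; [lra|]. split; [right; reflexivity|]. split; [lra|]. intros x Hx. eapply reach_step; [apply E5_m1; lra|]. apply reach_refl; lra. }
  destruct (Rle_lt_dec y (3 + (-2) * alpha)) as [Hl4|Hl4]. { exists (0 + 0 * alpha), (1 + (-1) * alpha), (-1), (3 + (-2) * alpha), ((-1) * (y - (3 + (-2) * alpha))). split; [lra|]. split; [lra|]. split; [lra|]. split; [lra|]. split; [right; reflexivity|]. split; [lra|]. intros x Hx. eapply reach_step; [apply E5_m1; lra|]. apply reach_refl; lra. }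
  destruct (Rle_lt_dec y (2 + 0 * alpha)) as [Hl5|Hl5]. { exists (2 + (-2) * alpha), (1 + 0 * alpha), 1, (1 + 0 * alpha), (1 * (y - (1 + 0 * alpha))). split; [lra|]. split; [lra|]. split; [lra|]. split; [lra|]. split; [left; reflexivity|]. split; [lra|]. intros x Hx. eapply reach_step; [apply E5_m2; lra|]. eapply reach_step; [apply E5_m5; lra|]. apply reach_refl; lra. }
  destruct (Rle_lt_dec y (3 + (-1) * alpha)) as [Hl6|Hl6]. { exists (1 + (-1) * alpha), (2 + (-2) * alpha), (-1), (4 + (-2) * alpha), ((-1) * (y - (4 + (-2) * alpha))). split; [lra|]. split; [lra|]. split; [lra|]. split; [lra|]. split; [right; reflexivity|]. split; [lra|]. intros x Hx. eapply reach_step; [apply E5_m1; lra|]. eapply reach_step; [apply E5_m2; lra|]. eapply reach_step; [apply E5_m5; lra|]. apply reach_refl; lra. }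
  destruct (Rle_lt_dec y (4 + (-2) * alpha)) as [Hl7|Hl7]. { exists (0 + 0 * alpha), (1 + (-1) * alpha), (-1), (4 + (-2) * alpha), ((-1) * (y - (4 + (-2) * alpha))). split; [lra|]. split; [lra|]. split; [lra|]. split; [lra|]. split; [right; reflexivity|]. split; [lra|]. intros x Hx. eapply reach_step; [apply E5_m1; lra|]. eapply reach_step; [apply E5_m2; lra|]. eapply reach_step; [apply E5_m5; lra|]. apply reach_refl; lra. }
  destruct (Rle_lt_dec y (3 + 0 * alpha)) as [Hl8|Hl8]. { exists (2 + (-2) * alpha), (1 + 0 * alpha), (-1), (5 + (-2) * alpha), ((-1) * (y - (5 + (-2) * alpha))). split; [lra|]. split; [lra|]. split; [lra|]. split; [lra|]. split; [right; reflexivity|]. split; [lra|]. intros x Hx. eapply reach_step; [apply E5_m2; lra|]. eapply reach_step; [apply E5_m5; lra|]. eapply reach_step; [apply E5_m2; lra|]. apply reach_refl; lra. }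
  destruct (Rle_lt_dec y (4 + (-1) * alpha)) as [Hl9|Hl9]. { exists (0 + 0 * alpha), (1 + (-1) * alpha), 1, (3 + 0 * alpha), (1 * (y - (3 + 0 * alpha))). split; [lra|]. split; [lra|]. split; [lra|]. split; [lra|]. split; [left; reflexivity|]. split; [lra|]. intros x Hx. eapply reach_step; [apply E5_m1; lra|]. eapply reach_step; [apply E5_m2; lra|]. apply reach_refl; lra. }
  destruct (Rle_lt_dec y (5 + (-2) * alpha)) as [Hl10|Hl10]. { exists (1 + (-1) * alpha), (2 + (-2) * alpha), 1, (3 + 0 * alpha), (1 * (y - (3 + 0 * alpha))). split; [lra|]. split; [lra|]. split; [lra|]. split; [lra|]. split; [left; reflexivity|]. split; [lra|]. intros x Hx. eapply reach_step; [apply E5_m1; lra|]. eapply reach_step; [apply E5_m2; lra|]. apply reach_refl; lra. }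
  exists (2 + (-2) * alpha), (1 + 0 * alpha), (-1), (6 + (-2) * alpha), ((-1) * (y - (6 + (-2) * alpha))). split; [lra|]. split; [lra|]. split; [lra|]. split; [lra|]. split; [right; reflexivity|]. split; [lra|]. intros x Hx. eapply reach_step; [apply E5_m2; lra|]. apply reach_refl; lra.
Qed.

Lemma E5_trans : transitive E5.
Proof.
  pose proof alpha_bounds.
  apply (transitive_crit E5 (0)%Z (0)%Z).
  - lra.
  - unfold len; simpl; lra.
  - exact E5_rot1.
  - exact E5_rot2.
  - exact E5_cov.
Qed.

Lemma E5_ok : is_IET E5.
Proof.
  pose proof alpha_bounds. split.
  - split; [|split].
    + intros i Hi; simpl in Hi. assert (i = 1%nat \/ i = 2%nat \/ i = 3%nat \/ i = 4%nat \/ i = 5%nat) as Hci by lia; destruct Hci as [-> | [-> | [-> | [-> | ->]]]]; simpl; lra.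
    + intros i Hi; simpl in *. assert (i = 1%nat \/ i = 2%nat \/ i = 3%nat \/ i = 4%nat \/ i = 5%nat) as Hci by lia; destruct Hci as [-> | [-> | [-> | [-> | ->]]]]; simpl; lia.
    + intros i j Hi Hj; simpl in *. assert (i = 1%nat \/ i = 2%nat \/ i = 3%nat \/ i = 4%nat \/ i = 5%nat) as Hci by lia; destruct Hci as [-> | [-> | [-> | [-> | ->]]]]; assert (j = 1%nat \/ j = 2%nat \/ j = 3%nat \/ j = 4%nat \/ j = 5%nat) as Hcj by lia; destruct Hcj as [-> | [-> | [-> | [-> | ->]]]]; simpl; intros; try lia; discriminate.
  - intros i Hi; simpl in Hi. assert (i = 1%nat \/ i = 2%nat \/ i = 3%nat \/ i = 4%nat) as Hci by lia; destruct Hci as [-> | [-> | [-> | ->]]]; (apply nonext_crit; [simpl; lia|simpl; lra|simpl; lra|unfold img, apt, bpt; simpl; lra]).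
Qed.


Ltac noA n := let i := fresh "i" in let Hi := fresh in let H1 := fresh in let H2 := fresh in
  let H3 := fresh in let H4 := fresh in
  intros [i [[Hi [H1 [H2 [H3 H4]]]] _]]; simpl in Hi;
  assert (i = 1%nat \/ i = 2%nat \/ i = 3%nat \/ i = 4%nat) as Hc by lia;
  destruct Hc as [-> | [-> | [-> | ->]]]; simpl in *; congruence.
Ltac noC := let H1 := fresh in let H2 := fresh in let H3 := fresh in
  intros [H1 [H2 H3]]; simpl in *; congruence.

Theorem lemma9p3 :
  (forall f : nat, (1 <= f <= 3)%nat ->
     exists T : IET, nI T = 4%nat /\ is_IET T /\ nflips T = f /\
       without_fake_discontinuities T /\ transitive T) /\
  (exists T : IET, nI T = 5%nat /\ is_IET T /\ nflips T = 5%nat /\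
       has_fake_discontinuity T /\ transitive T) /\
  (exists T : IET, nI T = 5%nat /\ is_IET T /\ nflips T = 5%nat /\
       without_fake_discontinuities T /\ transitive T).
Proof.
  split; [|split].
  - intros f Hf. assert (f = 1%nat \/ f = 2%nat \/ f = 3%nat) as Hc by lia.
    destruct Hc as [-> | [-> | ->]].
    + exists E1. split; [reflexivity|]. split; [exact E1_ok|]. split; [reflexivity|].
      split; [|exact E1_trans].
      split; [noA 4|split; [noA 4|split; noC]].
    + exists E2. split; [reflexivity|]. split; [exact E2_ok|]. split; [reflexivity|].
      split; [|exact E2_trans].
      split; [noA 4|split; [noA 4|split; noC]].
    + exists E3. split; [reflexivity|]. split; [exact E3_ok|]. split; [reflexivity|].
      split; [|exact E3_trans].
      split; [noA 4|split; [noA 4|split; noC]].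
  - exists E5. split; [reflexivity|]. split; [exact E5_ok|]. split; [reflexivity|].
    split; [|exact E5_trans].
    right; right; right. split; [noA 5|split; [noA 5|split; [noC|]]].
    unfold fakeD; simpl; auto.
  - exists E4. split; [reflexivity|]. split; [exact E4_ok|]. split; [reflexivity|].
    split; [|exact E4_trans].
    split; [noA 5|split; [noA 5|split; noC]].
Qed.
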